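(* Let $\mathbb{K}$ be an algebraically closed field of characteristic zero, $\mathcal{C}\subset\mathbb{K}^2$ an affine irreducible plane curve, $A=(a,b)\in\mathbb{K}^2$, and assume that $\mathcal{C}_0\neq\emptyset$, that $\mathcal{C}$ is not a circle centered at $A$, and that $\mathcal{C}$ is not a line passing through $A$. Then there is no infinite set $D\subset\mathbb{K}\setminus\{0\}$ together with an irreducible algebraic curve $\mathcal{M}\subset\mathbb{K}^2$ such that $\mathcal{M}$ is a component of $\mathfrak{C}(\mathcal{C},A,d)$ for every $d\in D$; that is, at most finitely many distances $d$ give conchoids $\mathfrak{C}(\mathcal{C},A,d)$ all sharing a common component.
   Context: For $\mathcal{C}$ defined by an irreducible polynomial $f(y_1,y_2)$ and $d\in\mathbb{K}\setminus\{0\}$: $\mathfrak{B}(\mathcal{C},A,d)\subset\mathbb{K}^2\times\mathbb{K}^2\times\mathbb{K}$ is the set of $(\bar x,\bar y,w)$ with $f(y_1,y_2)=0$, $(x_1-y_1)^2+(x_2-y_2)^2=d^2$, $(y_2-b)(x_1-y_1)-(y_1-a)(x_2-y_2)=0$, $w((y_1-a)^2+(y_2-b)^2)=1$; the conchoid $\mathfrak{C}(\mathcal{C},A,d)$ is the Zariski closure in $\mathbb{K}^2$ of the projection of $\mathfrak{B}(\mathcal{C},A,d)$ onto the $\bar x$ coordinates. $\mathcal{C}_0=\{(p_1,p_2)\in\mathcal{C}:(p_1-a)^2+(p_2-b)^2\neq0\}$. A circle centered at $A$ of radius $r$ is $(y_1-a)^2+(y_2-b)^2=r^2$. *)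

(* Defs.v *)
From HB Require Import structures.
From mathcomp Require Import all_boot all_order all_algebra.
From mathcomp Require Import mpoly.
Set Implicit Arguments. Unset Strict Implicit. Unset Printing Implicit Defensive.
Import Order.TTheory GRing.Theory.
Local Open Scope ring_scope.

Section Conchoid.
Variable K : fieldType.

Definition pt := (K * K)%type.

Definition ev2 (p : {mpoly K[2]}) (x : pt) : K :=
  p.@[fun i : 'I_2 => if val i == 0%N then x.1 else x.2].

Definition zeroset (S : {mpoly K[2]} -> Prop) : pt -> Prop :=
  fun x => forall p, S p -> ev2 p x = 0.

Definition V (f : {mpoly K[2]}) : pt -> Prop := fun x => ev2 f x = 0.

Definition subsetP (X Y : pt -> Prop) := forall x, X x -> Y x.
Definition seteqP (X Y : pt -> Prop) := forall x, X x <-> Y x.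

Definition algebraic (X : pt -> Prop) :=
  exists S : {mpoly K[2]} -> Prop, seteqP X (zeroset S).

Definition zariski_closure (Y : pt -> Prop) : pt -> Prop :=
  fun x => forall Z, algebraic Z -> subsetP Y Z -> Z x.

Definition irreducible_set (X : pt -> Prop) :=
  [/\ algebraic X, exists x, X x &
      forall Z1 Z2, algebraic Z1 -> algebraic Z2 ->
        subsetP X (fun x => Z1 x \/ Z2 x) -> subsetP X Z1 \/ subsetP X Z2].

Definition component (M X : pt -> Prop) :=
  [/\ irreducible_set M, subsetP M X &
      forall N, irreducible_set N -> subsetP M N -> subsetP N X -> seteqP N M].

Definition mirreducible (g : {mpoly K[2]}) :=
  [/\ g != 0, g \isn't a GRing.unit &
      forall p q, g = p * q -> p \is a GRing.unit \/ q \is a GRing.unit].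

Definition irreducible_curve (M : pt -> Prop) :=
  exists g, mirreducible g /\ seteqP M (V g).

(* the incidence set B(C, A, d) projected to the x coordinates *)
Definition conchoid_proj (f : {mpoly K[2]}) (a b d : K) : pt -> Prop :=
  fun x => exists (y : pt) (w : K),
    [/\ ev2 f y = 0,
        (x.1 - y.1) ^+ 2 + (x.2 - y.2) ^+ 2 = d ^+ 2,
        (y.2 - b) * (x.1 - y.1) - (y.1 - a) * (x.2 - y.2) = 0 &
        w * ((y.1 - a) ^+ 2 + (y.2 - b) ^+ 2) = 1].

Definition conchoid (f : {mpoly K[2]}) (a b d : K) : pt -> Prop :=
  zariski_closure (conchoid_proj f a b d).

Definition C0_nonempty (f : {mpoly K[2]}) (a b : K) :=
  exists y : pt, ev2 f y = 0 /\ (y.1 - a) ^+ 2 + (y.2 - b) ^+ 2 != 0.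

Definition is_circle_at (f : {mpoly K[2]}) (a b : K) :=
  exists r : K, seteqP (V f) (fun y => (y.1 - a) ^+ 2 + (y.2 - b) ^+ 2 = r ^+ 2).

Definition is_line_through (f : {mpoly K[2]}) (a b : K) :=
  exists al be ga : K, [/\ (al != 0) || (be != 0), al * a + be * b + ga = 0 &
     seteqP (V f) (fun y => al * y.1 + be * y.2 + ga = 0)].

Definition infinite_set (D : K -> Prop) :=
  ~ exists s : seq K, forall d, D d -> d \in s.

End Conchoid.

(* Main.v *)
Require Import Defs.
From HB Require Import structures.
From mathcomp Require Import all_boot all_order all_algebra.
From mathcomp Require Import mpoly.
From mathcomp Require Import ring.
From Stdlib Require Import Classical.
From mathcomp Require Import zify.
Import GRing.Theory.
Local Open Scope ring_scope.
Set Implicit Arguments. Unset Strict Implicit. Unset Printing Implicit Defensive.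

Lemma mmap_morph (n : nat) (R S T : nzRingType) (f : R -> S) (h : 'I_n -> S)
  (phi : {rmorphism S -> T}) (p : {mpoly R[n]}) :
  phi (mmap f h p) = mmap (phi \o f) (phi \o h) p.
Proof.
rewrite /mmap rmorph_sum; apply: eq_bigr => m _; rewrite rmorphM /mmap1 rmorph_prod.
by congr (_ * _); apply: eq_bigr => j _; rewrite rmorphXn.
Qed.

Lemma meval_ext (n : nat) (R : comNzRingType) (v1 v2 : 'I_n -> R) (p : {mpoly R[n]}) :
  v1 =1 v2 -> p.@[v1] = p.@[v2].
Proof. by move=> H; rewrite /meval /mmap; apply: eq_bigr => m _; rewrite (mmap1_eq _ H). Qed.

Section Basic.
Variable K : fieldType.
Implicit Types (p q : {mpoly K[2]}) (x : pt K).

Definition i0 : 'I_2 := ord0.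
Definition i1 : 'I_2 := ord_max.

Lemma ev2E p x : ev2 p x = \sum_(m <- msupp p) p@_m * x.1 ^+ m i0 * x.2 ^+ m i1.
Proof.
rewrite /ev2 /meval /mmap; apply: eq_bigr => m _.
rewrite /mmap1 !big_ord_recl big_ord0 mulr1 /= mulrA.
by congr (_ * _ * _ ^+ m _); apply: val_inj.
Qed.

Lemma ev2X0 x : ev2 'X_i0 x = x.1. Proof. by rewrite /ev2 mevalXU /i0 /i1. Qed.
Lemma ev2X1 x : ev2 'X_i1 x = x.2. Proof. by rewrite /ev2 mevalXU /i0 /i1. Qed.
Lemma ev2C c x : ev2 c%:MP x = c. Proof. by rewrite /ev2 mevalC. Qed.
Lemma ev2D p q x : ev2 (p + q) x = ev2 p x + ev2 q x. Proof. by rewrite /ev2 rmorphD. Qed.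
Lemma ev2B p q x : ev2 (p - q) x = ev2 p x - ev2 q x. Proof. by rewrite /ev2 rmorphB. Qed.
Lemma ev2M p q x : ev2 (p * q) x = ev2 p x * ev2 q x. Proof. by rewrite /ev2 rmorphM. Qed.
Lemma ev2Z c p x : ev2 (c *: p) x = c * ev2 p x. Proof. by rewrite /ev2 mevalZ. Qed.
Lemma ev2N p x : ev2 (- p) x = - ev2 p x. Proof. by rewrite /ev2 rmorphN. Qed.
Lemma ev2XnE p k x : ev2 (p ^+ k) x = ev2 p x ^+ k. Proof. by rewrite /ev2 rmorphXn. Qed.

Lemma ev2_sum (I : Type) (r : seq I) (P : pred I) (F : I -> {mpoly K[2]}) x :
  ev2 (\sum_(i <- r | P i) F i) x = \sum_(i <- r | P i) ev2 (F i) x.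
Proof. by rewrite /ev2 rmorph_sum. Qed.

Definition ev2E_simp := (ev2D, ev2B, ev2M, ev2Z, ev2N, ev2XnE, ev2X0, ev2X1, ev2C).

Lemma ev2_comp p (lq : 2.-tuple {mpoly K[2]}) x :
  ev2 (p \mPo lq) x = ev2 p (ev2 (tnth lq i0) x, ev2 (tnth lq i1) x).
Proof.
rewrite /ev2 comp_mpoly_meval; apply: meval_ext => j.
by case: j => [[|[|]]] //= H; congr (meval _ (tnth lq _)); apply: val_inj.
Qed.

End Basic.

Section Zero.
Variable K : fieldType.
Hypothesis Hc : [pchar K] =i pred0.

Lemma natr_inj_c0 (m n : nat) : m%:R = n%:R :> K -> m = n.
Proof.
have P := (pcharf0P K).1 Hc.
wlog le : m n / (m <= n)%N.
  move=> W E; case: (leqP m n) => H; first exact: W.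
  by apply/esym/W => //; exact: ltnW.
move=> E.
have: (n - m)%:R = 0 :> K by rewrite natrB // E subrr.
by move/eqP; rewrite P subn_eq0 => H; apply/eqP; rewrite eqn_leq le H.
Qed.

Lemma polyZ (P : {poly K}) : (forall s, P.[s] = 0) -> P = 0.
Proof.
move=> H; apply/eqP; apply/negPn/negP => nz.
have A1 : all (root P) [seq k%:R | k <- iota 0 (size P)].
  by apply/allP => z /mapP [k _ ->]; rewrite /root H.
have U1 : uniq [seq (k%:R : K) | k <- iota 0 (size P)].
  by rewrite (map_inj_uniq natr_inj_c0) iota_uniq.
by have := max_poly_roots nz A1 U1; rewrite size_map size_iota ltnn.
Qed.

Lemma mpolyZ (p : {mpoly K[2]}) : (forall x, ev2 p x = 0) -> p = 0.
Proof.
move=> H; case E: (msupp p) => [|ms s]; first exact: msuppnil0.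
have ms_in : ms \in msupp p by rewrite E mem_head.
have Hs s0 k : \sum_(m <- msupp p) (m i1 == k)%:R * (p@_m * s0 ^+ m i0) = 0.
  set Q := \sum_(m <- msupp p) (p@_m * s0 ^+ m i0) *: 'X^(m i1).
  have : Q = 0.
    apply: polyZ => t; rewrite /Q horner_sum; transitivity (ev2 p (s0, t)); last exact: H.
    rewrite ev2E.
    by apply: eq_bigr => m _; rewrite hornerZ hornerXn.
  move/(congr1 (fun q : {poly K} => q`_k)) => HQ; rewrite coef0 /Q coef_sum in HQ.
  rewrite -[RHS]HQ.
  by apply: eq_bigr => m _; rewrite coefZ coefXn eq_sym mulrC.
set R := \sum_(m <- msupp p) ((m i1 == ms i1)%:R * p@_m) *: 'X^(m i0).
have R0 : R = 0.
  apply: polyZ => s0; rewrite /R horner_sum; rewrite -[RHS](Hs s0 (ms i1)).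
  by apply: eq_bigr => m _; rewrite hornerZ hornerXn mulrA.
have := congr1 (fun q : {poly K} => q`_(ms i0)) R0.
rewrite coef0 /R coef_sum (bigD1_seq ms ms_in (msupp_uniq p)) /= coefZ coefXn !eqxx mul1r mulr1.
rewrite big1_seq ?addr0; last first.
  move=> m /andP [ne _]; rewrite coefZ coefXn.
  case: (eqVneq (m i1) (ms i1)) => E1; last by rewrite /= !mul0r.
  case: (eqVneq (ms i0) (m i0)) => E0; last by rewrite /= mulr0.
  case/eqP: ne; apply/mnmP => j; case: j => [[|[|]]] //= Hj.
    by have -> : Ordinal Hj = i0 by apply: val_inj.
  by have -> : Ordinal Hj = i1 by apply: val_inj.
by move/eqP; rewrite mcoeff_eq0 ms_in.
Qed.

End Zero.

Section Line.
Variable K : fieldType.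
Hypothesis Hc : [pchar K] =i pred0.

Lemma ev2mono (m : 'X_{1..2}) (x : pt K) : ev2 'X_[m] x = x.1 ^+ m i0 * x.2 ^+ m i1.
Proof.
rewrite /ev2 mevalX !big_ord_recl big_ord0 mulr1 /=.
by congr (_ * _ ^+ m _); apply: val_inj.
Qed.

Lemma XU1 : 'X_i1 = 'X_[U_(i1)] :> {mpoly K[2]}. Proof. by []. Qed.

Lemma split_X1 (fh : {mpoly K[2]}) :
  (forall s, ev2 fh (s, 0) = 0) ->
  fh = 'X_i1 * \sum_(m <- msupp fh | m i1 != 0%N) fh@_m *: 'X_[m - U_(i1)].
Proof.
move=> H0.
set r := \sum_(m <- msupp fh | m i1 == 0%N) fh@_m *: 'X_[m].
have E : fh = 'X_i1 * \sum_(m <- msupp fh | m i1 != 0%N) fh@_m *: 'X_[m - U_(i1)] + r.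
  rewrite {1}(mpolyE fh) (bigID (fun m : 'X_{1..2} => m i1 == 0%N)) /= addrC; congr (_ + _).
  rewrite mulr_sumr; apply: eq_bigr => m Hm; rewrite -scalerAr -mpolyXD.
  congr (_ *: 'X_[_]); apply/mnmP => j; rewrite mnmDE mnmBE mnm1E.
  by case: (eqVneq i1 j) => [<-|] /=; [rewrite subnKC // lt0n | rewrite subn0].
have evr x : ev2 r x = ev2 r (x.1, 0).
  rewrite /r !ev2_sum; apply: eq_bigr => m /eqP Hm.
  by rewrite !ev2Z !ev2mono Hm !expr0.
have r0 : r = 0.
  apply: (mpolyZ Hc) => x; rewrite evr.
  have := H0 x.1; rewrite {1}E ev2D ev2M ev2X1 /= mul0r add0r //.
by rewrite {1}E r0 addr0.
Qed.


Lemma unit_ev2_neq0 (g : {mpoly K[2]}) x : g \is a GRing.unit -> ev2 g x != 0.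
Proof.
case/unitrP => y [H1 _]; apply/eqP => H.
by have := congr1 (fun q => ev2 q x) H1; rewrite /= ev2M H mulr0 ev2C => /eqP; rewrite eq_sym oner_eq0.
Qed.

Lemma line_aux (f : {mpoly K[2]}) (a b p q e1 e2 : K) :
  p * e2 - q * e1 != 0 -> (p != 0) || (q != 0) ->
  mirreducible f -> (forall t, ev2 f (a + t * p, b + t * q) = 0) -> is_line_through f a b.
Proof.
move=> Hdet Hpq [_ _ Hirr] Hl; set det := p * e2 - q * e1.
pose lq : 2.-tuple {mpoly K[2]} :=
  [tuple a%:MP + p *: 'X_i0 + e1 *: 'X_i1; b%:MP + q *: 'X_i0 + e2 *: 'X_i1].
set fh := f \mPo lq.
have evfh x : ev2 fh x = ev2 f (a + p * x.1 + e1 * x.2, b + q * x.1 + e2 * x.2).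
  by rewrite /fh ev2_comp /= !ev2E_simp.
have Efh := split_X1 (fh := fh) _.
set gh := \sum_(m <- _ | _) _ in Efh.
have {}Efh : fh = 'X_i1 * gh.
  apply: Efh => s; rewrite evfh /= !mulr0 !addr0 -[p * s]mulrC -[q * s]mulrC; exact: Hl.
pose linv : 2.-tuple {mpoly K[2]} :=
  [tuple det^-1 *: (e2 *: ('X_i0 - a%:MP) - e1 *: ('X_i1 - b%:MP));
         det^-1 *: (p *: ('X_i1 - b%:MP) - q *: ('X_i0 - a%:MP))].
set g := gh \mPo linv.
set lam := tnth linv i1.
have evlam x : ev2 lam x = det^-1 * (p * (x.2 - b) - q * (x.1 - a)).
  by rewrite /lam /= !ev2E_simp.
have Ef : f = lam * g.
  apply/eqP; rewrite -subr_eq0; apply/eqP; apply: (mpolyZ Hc) => x.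
  rewrite ev2B ev2M /g ev2_comp -/lam evlam.
  set s := ev2 (tnth linv i0) x.
  have -> : ev2 f x = ev2 fh (s, det^-1 * (p * (x.2 - b) - q * (x.1 - a))).
    rewrite evfh /s /= !ev2E_simp; congr (ev2 f _); rewrite [LHS]surjective_pairing.
    congr (_, _); rewrite /det; field; done.
  by rewrite Efh ev2M ev2X1 /= subrr.
have lamA : ev2 lam (a, b) = 0 by rewrite evlam /= !subrr !mulr0 subrr mulr0.
case: (Hirr _ _ Ef) => [Hu|Hu].
  by have := unit_ev2_neq0 (a, b) Hu; rewrite lamA eqxx.
exists (- q / det), (p / det), ((q * a - p * b) / det); split.
- case/orP: Hpq => H; apply/orP; [right|left]; rewrite ?mulf_neq0 ?invr_eq0 ?oppr_eq0 //.
- by rewrite /det; field.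
- move=> x; rewrite /V Ef ev2M; have := unit_ev2_neq0 x Hu => Hg.
  have -> : - q / det * x.1 + p / det * x.2 + (q * a - p * b) / det = ev2 lam x.
    by rewrite evlam /det; field.
  split; first by move/eqP; rewrite mulf_eq0 (negbTE Hg) orbF => /eqP.
  by move=> ->; rewrite mul0r.
Qed.

Lemma line_lemma (f : {mpoly K[2]}) (a b p q : K) :
  (p != 0) || (q != 0) ->
  mirreducible f -> (forall t, ev2 f (a + t * p, b + t * q) = 0) -> is_line_through f a b.
Proof.
move=> Hpq; case: (eqVneq p 0) => Hp.
  apply: (line_aux (e1 := 1) (e2 := 0)) => //.
  by rewrite Hp mul0r mulr1 sub0r oppr_eq0; move: Hpq; rewrite Hp eqxx.
by apply: (line_aux (e1 := 0) (e2 := 1)) => //; rewrite mulr1 mulr0 subr0.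
Qed.

End Line.

Lemma mmap_ext (n : nat) (R S : nzRingType) (f1 f2 : R -> S) (h1 h2 : 'I_n -> S) p :
  f1 =1 f2 -> h1 =1 h2 -> mmap f1 h1 p = mmap f2 h2 p.
Proof.
by move=> Hf Hh; rewrite /mmap; apply: eq_bigr => m _; rewrite Hf (mmap1_eq _ Hh).
Qed.

Section Point.
Variable K : fieldType.

Lemma mmap_horner (g : {mpoly K[2]}) (h : 'I_2 -> {poly K}) t :
  (mmap (@polyC K) h g).[t] = ev2 g ((h i0).[t], (h i1).[t]).
Proof.
rewrite -[LHS]/(horner_eval t (mmap (@polyC K) h g)) mmap_morph.
rewrite /ev2 /meval; apply: mmap_ext => [c|j] /=; rewrite /horner_eval; first by rewrite hornerC.
by case: j => [[|[|]]] //= Hj; congr (_.[t]); congr h; apply: val_inj.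
Qed.

Lemma mpolyC_unit (c : K) : c != 0 -> (c%:MP : {mpoly K[2]}) \is a GRing.unit.
Proof.
move=> Hc; apply/unitrP; exists (c^-1)%:MP.
by rewrite -!mpolyCM mulVf ?mulfV.
Qed.

End Point.

Section PointClosed.
Variable K : closedFieldType.
Hypothesis Hc : [pchar K] =i pred0.

Lemma exists_zero (g : {mpoly K[2]}) (a b : K) :
  mirreducible g -> exists x, ev2 g x = 0 /\ x != (a, b).
Proof.
move=> [gnz gnu _].
pose Hs := mmap (@polyC K) (fun j : 'I_2 => if val j == 0%N then 'X else (b + 1)%:P) g.
have evHs s : Hs.[s] = ev2 g (s, b + 1) by rewrite mmap_horner /= hornerX hornerC.
have b1 : (b + 1, b) != (b, b) -> True by [].
have nb : b + 1 != b by rewrite -subr_eq0 addrC addKr oner_eq0.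
case: (boolP (size Hs != 1%N)) => [/closed_rootP [r /rootP Hr]|].
  exists (r, b + 1); split; first by rewrite -evHs.
  by apply/negP => /eqP [_ /eqP]; rewrite (negbTE nb).
rewrite negbK => /eqP sz.
have Hk : Hs = (Hs`_0)%:P by apply: size1_polyC; rewrite sz.
set k := Hs`_0 in Hk.
have knz : k != 0 by apply/negP => /eqP k0; move: sz; rewrite Hk k0 size_poly0.
pose Gc c := mmap (@polyC K) (fun j : 'I_2 => if val j == 0%N then c%:P else 'X) g.
have evG c t : (Gc c).[t] = ev2 g (c, t) by rewrite mmap_horner /= hornerX hornerC.
case: (classic (exists c, c != a /\ size (Gc c) != 1%N)) => [[c [ca /closed_rootP [t /rootP Ht]]]|Hn].
  exists (c, t); split; first by rewrite -evG.
  by apply/negP => /eqP [/eqP]; rewrite (negbTE ca).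
have Hconst x : x.1 != a -> ev2 g x = k.
  move=> Hx; case: (boolP (size (Gc x.1) == 1%N)) => [/eqP s1|s1]; last first.
    by case: Hn; exists x.1; split.
  have := size1_polyC (p := Gc x.1); rewrite s1 => /(_ (leqnn _)) HG.
  rewrite [x]surjective_pairing -evG HG hornerC.
  by rewrite -[(Gc x.1)`_0](hornerC _ (b + 1)) -HG evG -evHs Hk hornerC.
have Hprod : ('X_i0 - a%:MP) * (g - k%:MP) = 0.
  apply: (mpolyZ Hc) => x; rewrite !ev2E_simp.
  case: (eqVneq x.1 a) => [->|Hx]; first by rewrite subrr mul0r.
  by rewrite Hconst // subrr mulr0.
move: Hprod => /eqP; rewrite mulf_eq0 => /orP [/eqP H|].
  have := congr1 (fun q => ev2 q (a + 1, 0)) H; rewrite /= !ev2E_simp /=.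
  by rewrite addrC addKr => /eqP; rewrite oner_eq0.
rewrite subr_eq0 => /eqP gk.
by move: gnu; rewrite gk mpolyC_unit.
Qed.

End PointClosed.

Section Conch.
Variable K : fieldType.
Hypothesis Hc : [pchar K] =i pred0.
Variables (f : {mpoly K[2]}) (a b i : K).
Hypothesis Hi : i * i = -1.

Lemma two_neq0 : 2 != 0 :> K.
Proof. by rewrite ((pcharf0P K).1 Hc 2). Qed.

Lemma i_neq0 : i != 0.
Proof. by apply/eqP => i0; move: Hi; rewrite i0 mul0r => /eqP; rewrite eq_sym oppr_eq0 oner_eq0. Qed.

Definition lqt : 2.-tuple {mpoly K[2]} :=
  [tuple a%:MP + (2 * i)^-1 *: ('X_i1 - 'X_i0); b%:MP + 2^-1 *: ('X_i0 + 'X_i1)].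
Definition ft := f \mPo lqt.
Definition uf (x : pt K) := (x.2 - b) - i * (x.1 - a).
Definition wf (x : pt K) := (x.2 - b) + i * (x.1 - a).

Lemma ev_f_line x t :
  ev2 f (a + t * (x.1 - a), b + t * (x.2 - b)) = ev2 ft (t * uf x, t * wf x).
Proof.
rewrite /ft ev2_comp /= !ev2E_simp /=; congr (ev2 f (_, _)); rewrite /uf /wf.
  by have := two_neq0; have := i_neq0; move=> H1 H2; field; rewrite H1 H2.
by have := two_neq0 => H2; field.
Qed.

Lemma Nuw x : (x.1 - a) ^+ 2 + (x.2 - b) ^+ 2 = uf x * wf x.
Proof.
rewrite /uf /wf; have -> : (x.2 - b - i * (x.1 - a)) * (x.2 - b + i * (x.1 - a)) =
  (x.2 - b) ^+ 2 - (i * i) * (x.1 - a) ^+ 2 by ring.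
by rewrite Hi; ring.
Qed.

Definition nn := msize ft.
Definition ee (m : 'X_{1..2}) := (nn + m i0 - m i1)%N.

Lemma mdeg2 (m : 'X_{1..2}) : mdeg m = (m i0 + m i1)%N.
Proof. by rewrite mdegE big_ord_recl big_ord1; congr (_ + m _)%N; apply: val_inj. Qed.

Lemma supp_deg m : m \in msupp ft -> (m i0 + m i1 < nn)%N.
Proof. by move/msize_mdeg_lt; rewrite mdeg2. Qed.

Variable mm : nat.
Hypothesis Hmm : forall m, m \in msupp ft -> (mm <= ee m)%N.

Definition Wev (x : pt K) (r d : K) :=
  \sum_(m <- msupp ft) ft@_m * wf x ^+ (nn - m i0 + m i1) * (r - d) ^+ (m i0 + m i1)
     * r ^+ (ee m - mm).

Lemma term_id (c w u r t : K) (j k s : nat) :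
  r ^+ 2 = u * w ->
  c * w ^+ (k + s + k) * (t * r) ^+ (j + k) * r ^+ (j + s + j) =
  r ^+ (j + k + s) * w ^+ (j + k + s) * (c * (t * u) ^+ j * (t * w) ^+ k).
Proof.
move=> Hr.
have H2 : r ^+ j * r ^+ j = u ^+ j * w ^+ j by rewrite -exprD addnn -mul2n exprM Hr exprMn.
rewrite !exprD !exprMn.
move: H2; move: (r ^+ j) (r ^+ k) (r ^+ s) (w ^+ j) (w ^+ k) (w ^+ s) (u ^+ j) (t ^+ j) (t ^+ k).
move=> A B C W1 W2 W3 U1 T1 T2 H2.
transitivity ((A * A) * (c * W2 * W3 * W2 * T1 * T2 * A * B * C)); first by ring.
by rewrite H2; ring.
Qed.

Lemma KI x r d : r != 0 -> r ^+ 2 = uf x * wf x ->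
  Wev x r d * r ^+ mm =
  r ^+ nn * wf x ^+ nn * ev2 f (a + ((r - d) / r) * (x.1 - a), b + ((r - d) / r) * (x.2 - b)).
Proof.
move=> rnz Hr; rewrite ev_f_line ev2E /Wev mulr_suml mulr_sumr; apply: eq_big_seq => m Hm.
have Hd := supp_deg Hm; have He := Hmm Hm.
rewrite -mulrA -exprD subnK //.
set t := (r - d) / r.
have -> : r - d = t * r by rewrite /t divfK.
have [s Hs] : exists s, nn = (m i0 + m i1 + s)%N by exists (nn - (m i0 + m i1))%N; lia.
have E1 : (nn - m i0 + m i1 = m i1 + s + m i1)%N by lia.
have E2 : (ee m = m i0 + s + m i0)%N by rewrite /ee; lia.
by rewrite E1 E2 Hs /= (term_id _ _ _ _ _ Hr) !mulrA.
Qed.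


Definition upol : {mpoly K[2]} := ('X_i1 - b%:MP) - i *: ('X_i0 - a%:MP).
Definition wpol : {mpoly K[2]} := ('X_i1 - b%:MP) + i *: ('X_i0 - a%:MP).
Lemma ev_upol x : ev2 upol x = uf x. Proof. by rewrite /upol !ev2E_simp. Qed.
Lemma ev_wpol x : ev2 wpol x = wf x. Proof. by rewrite /wpol !ev2E_simp. Qed.

Definition Wp (d : K) : {poly {mpoly K[2]}} :=
  \sum_(m <- msupp ft) ((ft@_m)%:MP * wpol ^+ (nn - m i0 + m i1))%:P
      * ('X - (d%:MP)%:P) ^+ (m i0 + m i1) * 'X ^+ (ee m - mm).
Definition dv : {poly {mpoly K[2]}} := 'X^2 - (upol * wpol)%:P.
Definition remW d := Pdiv.Ring.rmodp (Wp d) dv.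
Definition Psi d := (remW d)`_0 ^+ 2 - upol * wpol * (remW d)`_1 ^+ 2.

Definition vx (x : pt K) := fun j : 'I_2 => if val j == 0%N then x.1 else x.2.

Lemma map_Wp x r d : (map_poly (meval (vx x)) (Wp d)).[r] = Wev x r d.
Proof.
rewrite /Wp rmorph_sum horner_sum /Wev; apply: eq_bigr => m _.
rewrite !rmorphM !rmorphXn /= rmorphB /= !map_polyC map_polyX !hornerE.
change (ev2 (ft@_m)%:MP x * ev2 wpol x ^+ (nn - m i0 + m i1) * (r - ev2 d%:MP x) ^+ (m i0 + m i1)
  * r ^+ (ee m - mm) = ft@_m * wf x ^+ (nn - m i0 + m i1) * (r - d) ^+ (m i0 + m i1) *
  r ^+ (ee m - mm)).
by rewrite !ev2C ev_wpol.
Qed.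


Lemma evrem x r d : r ^+ 2 = uf x * wf x ->
  (map_poly (meval (vx x)) (Wp d)).[r] = ev2 (remW d)`_0 x + ev2 (remW d)`_1 x * r.
Proof.
move=> Hr.
have mon : dv \is monic by apply: monicXnsubC.
have szdv : size dv = 3%N by apply: size_XnsubC.
have szr : (size (remW d) <= 2)%N.
  have := Pdiv.Ring.ltn_rmodp (Wp d) dv; rewrite szdv -size_poly_eq0 szdv /= => H.
  by rewrite /remW -ltnS H.
rewrite {1}(Pdiv.RingMonic.rdivp_eq mon (Wp d)) rmorphD rmorphM /= hornerD hornerM.
have -> : (map_poly (meval (vx x)) dv).[r] = 0.
  rewrite /dv rmorphB /= map_polyXn map_polyC hornerD hornerN hornerXn hornerC.
  change (r ^+ 2 - ev2 (upol * wpol) x = 0); by rewrite ev2M ev_upol ev_wpol Hr subrr.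
rewrite mulr0 add0r (horner_coef_wide (n := 2)); last first.
  apply: leq_trans szr; exact: size_poly.
by rewrite big_ord_recr big_ord1 /= !coef_map expr0 mulr1 expr1.
Qed.

Lemma evPsi x r d : r ^+ 2 = uf x * wf x -> ev2 (Psi d) x = Wev x r d * Wev x (- r) d.
Proof.
move=> Hr.
have Hr' : (- r) ^+ 2 = uf x * wf x by rewrite sqrrN.
rewrite -(map_Wp x r) -(map_Wp x (- r)) (evrem _ Hr) (evrem _ Hr').
rewrite /Psi ev2B ev2M !ev2XnE ev2M ev_upol ev_wpol -Hr; ring.
Qed.


Lemma proj_vanish x d : d != 0 -> conchoid_proj f a b d x -> x != (a, b) -> ev2 (Psi d) x = 0.
Proof.
move=> dnz [y [w0 [Hfy Hdist Hcol Hw]]] xA.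
set X1 := x.1 - a; set X2 := x.2 - b; set Y1 := y.1 - a; set Y2 := y.2 - b.
have NY : Y1 ^+ 2 + Y2 ^+ 2 != 0.
  by apply/eqP => H; move: Hw; rewrite -/Y1 -/Y2 H mulr0 => /eqP; rewrite eq_sym oner_eq0.
have Hcol' : Y2 * X1 = Y1 * X2.
  apply/eqP; rewrite -subr_eq0; apply/eqP; rewrite -Hcol /X1 /X2 /Y1 /Y2; ring.
have [t [Ht1 Ht2]] : exists t, Y1 = t * X1 /\ Y2 = t * X2.
  case: (eqVneq X1 0) => H1.
    have H2 : X2 != 0.
      apply/negP => /eqP H2; move/negP: xA; apply; apply/eqP.
      rewrite [x]surjective_pairing; congr (_, _); apply/eqP; rewrite -subr_eq0; apply/eqP.
        exact: H1.
      exact: H2.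
    exists (Y2 / X2); split; last by rewrite divfK.
    rewrite H1 mulr0; move: Hcol'; rewrite H1 mulr0 => /esym/eqP.
    by rewrite mulf_eq0 (negbTE H2) orbF => /eqP.
  exists (Y1 / X1); split; first by rewrite divfK.
  by apply: (mulIf H1); rewrite Hcol'; field.
have NX : X1 ^+ 2 + X2 ^+ 2 != 0.
  by apply/eqP => H; move: NY; rewrite Ht1 Ht2 !exprMn -mulrDr H mulr0 eqxx.
have Hd2 : (1 - t) ^+ 2 * (X1 ^+ 2 + X2 ^+ 2) = d ^+ 2.
  rewrite -Hdist; have -> : x.1 - y.1 = X1 - Y1 by rewrite /X1 /Y1; ring.
  have -> : x.2 - y.2 = X2 - Y2 by rewrite /X2 /Y2; ring.
  rewrite Ht1 Ht2; ring.
have t1 : 1 - t != 0.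
  by apply/eqP => H; move: Hd2; rewrite H expr0n mul0r => /esym/eqP; rewrite expf_eq0 (negbTE dnz) andbF.
set r := d / (1 - t).
have rnz : r != 0 by rewrite mulf_neq0 ?invr_eq0.
have Hr : r ^+ 2 = uf x * wf x.
  rewrite -Nuw // -/X1 -/X2 /r expr_div_n -Hd2; field; done.
rewrite (evPsi _ Hr).
suff -> : Wev x r d = 0 by rewrite mul0r.
apply: (mulIf (expf_neq0 mm rnz)); rewrite mul0r KI //.
have Er : r * (1 - t) = d by rewrite /r divfK.
have -> : (r - d) / r = t.
  by rewrite -{1}Er (_ : r - r * (1 - t) = t * r) ?mulfK //; ring.
rewrite -/X1 -/X2 -Ht1 -Ht2 /Y1 /Y2 !subrKC -surjective_pairing Hfy mulr0 //.
Qed.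

End Conch.

Lemma argmin_seq (T : eqType) (s : seq T) (F : T -> nat) :
  s != [::] -> exists2 x, x \in s & forall y, y \in s -> (F x <= F y)%N.
Proof.
elim: s => // x s IH _; case: (eqVneq s [::]) => [->|ne].
  by exists x; rewrite ?mem_seq1 // => y; rewrite mem_seq1 => /eqP ->.
have [z zin Hz] := IH ne; case: (leqP (F x) (F z)) => H.
  exists x; first exact: mem_head.
  by move=> y; rewrite in_cons => /orP [/eqP ->|/Hz]; [|exact: leq_trans].
exists z; first by rewrite in_cons zin orbT.
by move=> y; rewrite in_cons => /orP [/eqP ->|/Hz //]; exact: ltnW.
Qed.

Section Final.
Variable K : closedFieldType.
Hypothesis Hc : [pchar K] =i pred0.

Lemma roots_list (p : {poly K}) : p != 0 -> exists rs : seq K, forall z, p.[z] = 0 -> z \in rs.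
Proof.
move=> pnz; have [rs Hrs] := closed_field_poly_normal p; exists rs => z.
rewrite {1}Hrs hornerZ horner_prod => /eqP; rewrite mulf_eq0 lead_coef_eq0 (negbTE pnz) /=.
by rewrite prodf_seq_eq0 => /hasP [w win]; rewrite hornerXsubC subr_eq0 => /eqP ->.
Qed.

Lemma exists_sqrt (c : K) : exists r, r ^+ 2 = c.
Proof.
have : size ('X^2 - c%:P : {poly K}) != 1%N by rewrite size_XnsubC.
by case/closed_rootP => r; rewrite /root !hornerE subr_eq0 => /eqP E; exists r.
Qed.


Variables (f : {mpoly K[2]}) (a b i : K).
Hypothesis Hi : i * i = -1.

Lemma nv_case1 mm (Hmm : forall m, m \in msupp (ft f a b i) -> (mm <= ee f a b i m)%N)
  (x0 : pt K) r d :
  wf a b i x0 != 0 -> r != 0 -> r ^+ 2 = uf a b i x0 * wf a b i x0 ->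
  Wev f a b i mm x0 r d = 0 ->
  ev2 f (a + ((r - d) / r) * (x0.1 - a), b + ((r - d) / r) * (x0.2 - b)) = 0.
Proof.
move=> wnz rnz Hr W0; have := KI Hc Hi Hmm d rnz Hr; rewrite W0 mul0r => /esym/eqP.
by rewrite !mulf_eq0 !expf_eq0 (negbTE wnz) (negbTE rnz) !andbF /= => /eqP.
Qed.

Lemma nv_case2 (ms : 'X_{1..2}) (x0 : pt K) :
  ms \in msupp (ft f a b i) ->
  (forall m, m \in msupp (ft f a b i) -> (ee f a b i ms <= ee f a b i m)%N) ->
  wf a b i x0 != 0 ->
  exists Pz : {poly K}, Pz != 0 /\ forall d, Wev f a b i (ee f a b i ms) x0 0 d = Pz.[d].
Proof.
move=> msin Hmin wnz.
set mm := ee f a b i ms.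
set Pz := \sum_(m <- msupp (ft f a b i))
   ((ft f a b i)@_m * wf a b i x0 ^+ (nn f a b i - m i0 + m i1) * 0 ^+ (ee f a b i m - mm)
     * (-1) ^+ (m i0 + m i1)) *: 'X^(m i0 + m i1).
exists Pz; split; last first.
  move=> d; rewrite /Pz horner_sum /Wev; apply: eq_bigr => m _.
  rewrite hornerZ hornerXn sub0r (exprNn d).
  move: ((ft f a b i)@_m) (wf a b i x0 ^+ _) ((-1) ^+ _ : K) (d ^+ _) (0 ^+ _ : K) => A B C D E.
  ring.
apply/negP => /eqP P0.
have := congr1 (fun q : {poly K} => q`_(ms i0 + ms i1)) P0.
rewrite coef0 /Pz coef_sum (bigD1_seq ms msin (msupp_uniq _)) /= coefZ coefXn eqxx subnn expr0 mulr1.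
rewrite big1_seq ?addr0; last first.
  move=> m /andP [ne min]; rewrite coefZ coefXn.
  case: (eqVneq (m i0 + m i1)%N (ms i0 + ms i1)%N) => Ek; last by rewrite /= mulr0.
  have Hle := Hmin m min.
  case: (eqVneq (ee f a b i m) mm) => Ee; last first.
    have H0 : (ee f a b i m - mm != 0)%N by move/eqP: Ee; lia.
    by rewrite expr0n (negbTE H0) /= !mulr0 !mul0r.
  case/eqP: ne; have Hd1 := supp_deg min; have Hd2 := supp_deg msin.
  move: Ee Ek; rewrite /mm /ee => Ee Ek.
  apply/mnmP => j; case: j => [[|[|]]] //= Hj;
    [have -> : Ordinal Hj = i0 by apply: val_inj | have -> : Ordinal Hj = i1 by apply: val_inj]; lia.
rewrite /= mulr1 => /eqP; rewrite !mulf_eq0 !expf_eq0 (negbTE wnz) andbF orbF /= oppr_eq0 oner_eq0 andbF orbF.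
by rewrite mcoeff_eq0 msin.
Qed.

End Final.

Unset Implicit Arguments. Set Strict Implicit.

Theorem lemma4 (K : closedFieldType) (Hchar : [pchar K] =i pred0)
  (f : {mpoly K[2]}) (a b : K) :
  mirreducible f ->
  C0_nonempty f a b ->
  ~ is_circle_at f a b ->
  ~ is_line_through f a b ->
  ~ (exists (D : K -> Prop) (M : pt K -> Prop),
        [/\ infinite_set D, (forall d, D d -> d != 0), irreducible_curve M &
            forall d, D d -> component M (conchoid f a b d)]).
Proof.
move=> firr _ _ Hnl [D [M [Dinf Dnz [g [girr HM]] Hcomp]]].
have [x0 [gx0 x0A]] := exists_zero Hchar a b girr.
have Mx0 : M x0 by apply/HM.
set X1 := x0.1 - a; set X2 := x0.2 - b.
have XnZ : (X1 != 0) || (X2 != 0).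
  case: (eqVneq X1 0) => H1; last by apply/orP; left.
  case: (eqVneq X2 0) => H2; last by apply/orP; right.
  move/negP: x0A; case; apply/eqP.
  rewrite [x0]surjective_pairing; congr (_, _); apply/eqP; rewrite -subr_eq0; apply/eqP; done.
have [i [Hi wnz]] : exists i : K, i * i = -1 /\ wf a b i x0 != 0.
  have [j Hj] := exists_sqrt (-1 : K).
  case: (eqVneq (wf a b j x0) 0) => Hw; last by exists j; rewrite -expr2.
  exists (- j); split; first by rewrite mulrNN -expr2.
  apply/negP => /eqP Hw'; move: Hw Hw'; rewrite /wf -/X1 -/X2 => H1 H2.
  have E2 : 2 * X2 = 0 by rewrite -[RHS](addr0 0) -{1}H1 -H2; ring.
  have jnz : j != 0 by apply/eqP => j0; move: Hj; rewrite j0 expr0n /= => /eqP; rewrite eq_sym oppr_eq0 oner_eq0.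
  have E2' : X2 = 0 by move/eqP: E2; rewrite mulf_eq0 (negbTE (two_neq0 Hchar)) /= => /eqP.
  have E1 : X1 = 0.
    by move: H1; rewrite E2' add0r => /eqP; rewrite mulf_eq0 (negbTE jnz) /= => /eqP.
  by move: XnZ; rewrite E1 E2' eqxx.
have [r0 Hr0] := exists_sqrt (uf a b i x0 * wf a b i x0).
pose Fp := mmap (@polyC K)
  (fun j : 'I_2 => if val j == 0%N then a%:P + X1 *: 'X else b%:P + X2 *: 'X) f.
have evF t : Fp.[t] = ev2 f (a + t * X1, b + t * X2).
  by rewrite mmap_horner /= !hornerE ![X1 * t]mulrC ![X2 * t]mulrC.
have Fnz : Fp != 0.
  apply/negP => /eqP F0; apply: Hnl; apply: (line_lemma Hchar XnZ firr) => t.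
  by rewrite -evF F0 horner0.
have ftnz : msupp (ft f a b i) != [::].
  apply/negP => /eqP E; move: Fnz; rewrite (polyZ Hchar (P := Fp)) ?eqxx // => t.
  by rewrite evF (ev_f_line Hchar f a b Hi x0 t) (msuppnil0 E) /ev2 rmorph0.
have [ms msin Hmin] := argmin_seq (ee f a b i) ftnz.
set mm := ee f a b i ms.
have Hmm : forall m, m \in msupp (ft f a b i) -> (mm <= ee f a b i m)%N := Hmin.
have [Bad HBad] : exists Bad : seq K, forall d, d \notin Bad ->
    Wev f a b i mm x0 r0 d * Wev f a b i mm x0 (- r0) d != 0.
  case: (eqVneq r0 0) => [r00|r0nz].
    have [Pz [Pznz HPz]] := nv_case2 msin Hmin wnz.
    have [rs Hrs] := roots_list Pznz.
    exists rs => d dn; rewrite r00 oppr0 !HPz mulf_neq0 //; apply/negP => /eqP/Hrs;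
      by rewrite (negbTE dn).
  have [rs Hrs] := roots_list Fnz.
  exists ([seq r0 * (1 - z) | z <- rs] ++ [seq - r0 * (1 - z) | z <- rs]) => d.
  rewrite mem_cat negb_or => /andP [n1 n2].
  have key r' : r' != 0 -> r' ^+ 2 = uf a b i x0 * wf a b i x0 ->
      d \notin [seq r' * (1 - z) | z <- rs] -> Wev f a b i mm x0 r' d != 0.
    move=> r'nz Hr' nin; apply/negP => /eqP W0.
    have := nv_case1 Hchar Hi Hmm wnz r'nz Hr' W0; rewrite -/X1 -/X2 -evF => /Hrs zin.
    move/negP: nin; apply; apply/mapP; exists ((r' - d) / r') => //.
    by field.
  rewrite mulf_neq0 // key //; first by rewrite oppr_eq0.
  by rewrite sqrrN.
have [d [Dd dnB]] : exists d, D d /\ d \notin Bad.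
  apply: NNPP => H; apply: Dinf; exists Bad => d Dd; apply: NNPP => nin; apply: H.
  by exists d; split => //; apply/negP.
have dnz := Dnz d Dd.
have [_ Msub _] := Hcomp d Dd.
have Cx0 := Msub x0 Mx0.
pose S := fun p : {mpoly K[2]} => p = Psi f a b i mm d * ('X_i0 - a%:MP)
                              \/ p = Psi f a b i mm d * ('X_i1 - b%:MP).
have Zx0 : zeroset S x0.
  apply: Cx0; first by exists S.
  move=> x Hx p [-> | ->]; rewrite ev2M; (case: (eqVneq x (a, b)) => [E | xA];
    [ | by rewrite (proj_vanish Hchar Hi Hmm dnz Hx xA) mul0r]).
    by rewrite E (_ : ev2 ('X_i0 - a%:MP) (a, b) = 0) ?mulr0 // ev2B ev2X0 ev2C subrr.
  by rewrite E (_ : ev2 ('X_i1 - b%:MP) (a, b) = 0) ?mulr0 // ev2B ev2X1 ev2C subrr.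
have Psi0 : ev2 (Psi f a b i mm d) x0 = 0.
  have Z1 := Zx0 _ (or_introl erefl); have Z2 := Zx0 _ (or_intror erefl).
  move: Z1 Z2; rewrite !ev2M !ev2E_simp -/X1 -/X2 => /eqP Z1 /eqP Z2.
  move: Z1 Z2; rewrite !mulf_eq0; case/orP: XnZ => H; rewrite (negbTE H) orbF.
    by move=> /eqP.
  by move=> _ /eqP.
by move: (HBad d dnB); rewrite -(evPsi f mm d Hr0) Psi0 eqxx.
Qed.
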